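(* Let $G=P_n$ be a path on $n\ge3$ vertices, and let $L$ be a list-assignment with $|L(v)|\ge\deg(v)+1$ for all $v\in V(G)$. If $\alpha$ and $\beta$ are both unfrozen $L$-colourings and $\left|\bigcup_{v\in V(G)}L(v)\right|\ge4$, then $\alpha\sim\beta$.
   Context: An $L$-colouring is a proper colouring $\varphi$ with $\varphi(v)\in L(v)$ for all $v$. A vertex $v$ is frozen under $\varphi$ if every colour of $L(v)\setminus\{\varphi(v)\}$ appears on a neighbour of $v$; a colouring is unfrozen if at least one vertex is not frozen. $\alpha\sim\beta$ means $\alpha$ can be transformed into $\beta$ by a sequence of single-vertex recolouring steps, each keeping the colouring a proper $L$-colouring. *)

(* Defs.v *)
From mathcomp Require Import all_boot.
From Stdlib Require Import Relation_Operators.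
Set Implicit Arguments. Unset Strict Implicit. Unset Printing Implicit Defensive.

Definition path_adj (n : nat) (i j : 'I_n) : bool :=
  (i.+1 == j :> nat) || (j.+1 == i :> nat).

Definition path_deg (n : nat) (v : 'I_n) : nat := #|[pred u : 'I_n | path_adj v u]|.

(* A list assignment: each vertex gets a finite list of colours (natural numbers);
   |L(v)| is the number of distinct colours in L v. *)
Definition list_size (s : seq nat) : nat := size (undup s).

Definition union_size (n : nat) (L : 'I_n -> seq nat) : nat :=
  size (undup (flatten [seq L v | v <- enum 'I_n])).

Definition is_Lcol (n : nat) (L : 'I_n -> seq nat) (phi : 'I_n -> nat) : Prop :=
  (forall v, phi v \in L v) /\ (forall u v, path_adj u v -> phi u <> phi v).

Definition frozen (n : nat) (L : 'I_n -> seq nat) (phi : 'I_n -> nat) (v : 'I_n) : Prop :=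
  forall c, c \in L v -> c <> phi v -> exists u, path_adj v u /\ phi u = c.

Definition unfrozen (n : nat) (L : 'I_n -> seq nat) (phi : 'I_n -> nat) : Prop :=
  exists v, ~ frozen L phi v.

Definition recol_step (n : nat) (L : 'I_n -> seq nat) (a b : 'I_n -> nat) : Prop :=
  is_Lcol L a /\ is_Lcol L b /\ exists v, forall u, u <> v -> a u = b u.

Definition reconf (n : nat) (L : 'I_n -> seq nat) (a b : 'I_n -> nat) : Prop :=
  clos_refl_trans_1n ('I_n -> nat) (@recol_step n L) a b.

(* Main.v *)
Require Import Defs.
From mathcomp Require Import all_boot.
From Stdlib Require Import Relation_Operators Operators_Properties Classical.
From mathcomp Require Import zify.
Set Implicit Arguments. Unset Strict Implicit. Unset Printing Implicit Defensive.

Definition nbc (n : nat) (f : nat -> nat) (v : nat) : seq nat :=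
  (if 0 < v then [:: f v.-1] else [::]) ++ (if v.+1 < n then [:: f v.+1] else [::]).
Definition degN (n v : nat) : nat := (0 < v) + (v.+1 < n).
Definition colN n (L : nat -> seq nat) (f : nat -> nat) :=
  (forall v, v < n -> f v \in L v) /\ (forall v, v.+1 < n -> f v != f v.+1).
Definition freeN n (L : nat -> seq nat) f v :=
  exists z, [/\ z \in L v, z != f v & z \notin nbc n f v].
Definition unfrN n L f := exists v, v < n /\ freeN n L f v.
Definition stepN n L (a b : nat -> nat) :=
  [/\ colN n L a, colN n L b & exists v, forall u, u < n -> u != v -> a u = b u].
Definition rcN n L := clos_refl_trans (nat -> nat) (stepN n L).
Definition sz (s : seq nat) := size (undup s).
Definition okN n L := forall v, v < n -> degN n v < sz (L v).
Definition slackN n L := exists s, s < n /\ (degN n s).+1 < sz (L s).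
Definition union4 n (L : nat -> seq nat) :=
  exists s : seq nat, [/\ uniq s, 4 <= size s &
     forall z, z \in s -> exists v, v < n /\ z \in L v].
Definition upd (f : nat -> nat) (v c : nat) := fun i => if i == v then c else f i.
Definition Lrm (L : nat -> seq nat) (u c : nat) :=
  fun i => if i == u then filter (predC1 c) (L i) else L i.

Lemma size_nbc n f v : size (nbc n f v) = degN n v.
Proof. by rewrite /nbc /degN; case: (0 < v); case: (v.+1 < n). Qed.

Lemma rc_refl n L a : rcN n L a a. Proof. exact: rt_refl. Qed.
Lemma rc_trans n L a b c : rcN n L a b -> rcN n L b c -> rcN n L a c.
Proof. exact: rt_trans. Qed.
Lemma rc_sym n L a b : rcN n L a b -> rcN n L b a.
Proof.
elim=> [x y [ca cb [v H]]|x|x y z _ H1 _ H2].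
- apply: rt_step; split => //; exists v => u un uv; by rewrite H.
- exact: rt_refl.
- exact: rt_trans H2 H1.
Qed.

Lemma rc_map n L n' L' (F : (nat -> nat) -> (nat -> nat)) a b :
  (forall x y, stepN n L x y -> stepN n' L' (F x) (F y)) ->
  rcN n L a b -> rcN n' L' (F a) (F b).
Proof.
move=> HF; elim=> [x y H|x|x y z _ H1 _ H2].
- exact/rt_step/HF.
- exact: rt_refl.
- exact: rt_trans H1 H2.
Qed.

Lemma col_eq n L a b : colN n L a -> (forall i, i < n -> a i = b i) -> colN n L b.
Proof.
move=> [H1 H2] E; split=> v vn; first by rewrite -E //; apply: H1.
have vn' : v < n by lia.
by rewrite -!E //; apply: H2.
Qed.

Lemma rc_eq n L a b : colN n L a -> (forall i, i < n -> a i = b i) -> rcN n L a b.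
Proof.
move=> ca E; apply: rt_step; split => //; first exact: col_eq E.
by exists 0 => u un _; rewrite E.
Qed.

Lemma upd_col n L f v c : colN n L f -> v < n -> c \in L v -> c \notin nbc n f v ->
  colN n L (upd f v c).
Proof.
move=> [H1 H2] vn cL cN; rewrite /upd; split=> i iN.
  by case: eqP => [->|]; [| move=> _; exact: H1].
move: cN; rewrite /nbc mem_cat negb_or => /andP [N1 N2].
case: (eqVneq i v) => [E|iv].
  subst i; idtac.
  by rewrite (gtn_eqF (ltnSn v)); move: N2; rewrite iN inE.
case: (eqVneq i.+1 v) => [E|iv1].
  by move: N1; rewrite -E /= inE eq_sym.
exact: H2.
Qed.

Lemma rc_upd n L f v c : colN n L f -> v < n -> c \in L v -> c \notin nbc n f v ->
  rcN n L f (upd f v c).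
Proof.
move=> cf vn cL cN; apply: rt_step; split => //; first exact: upd_col.
by exists v => u _ uv; rewrite /upd (negbTE uv).
Qed.

Lemma avail (s t : seq nat) : size t < sz s -> exists z, z \in s /\ z \notin t.
Proof.
move=> H; apply: NNPP => A.
suff : sz s <= size t by lia.
rewrite /sz; apply: uniq_leq_size; first exact: undup_uniq.
move=> z; rewrite mem_undup => zs.
by case: (boolP (z \in t)) => // zt; case: A; exists z.
Qed.

Lemma uniq_sz (s t : seq nat) : uniq t -> {subset t <= s} -> size t <= sz s.
Proof. move=> ut st; apply: uniq_leq_size => // z /st; by rewrite mem_undup. Qed.

Lemma sz_sub (s t : seq nat) : {subset s <= t} -> sz s <= size t.
Proof. move=> st; apply: uniq_leq_size; first exact: undup_uniq.
by move=> z; rewrite mem_undup => /st. Qed.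

Lemma sz_filter (s : seq nat) c : sz s <= (sz (filter (predC1 c) s)).+1.
Proof.
rewrite /sz; have := uniq_leq_size (undup_uniq s) (s2 := c :: undup (filter (predC1 c) s)).
apply => z; rewrite mem_undup inE mem_undup mem_filter /=.
by case: eqP.
Qed.

Lemma sz_filter_id (s : seq nat) c : c \notin s -> sz (filter (predC1 c) s) = sz s.
Proof.
move=> cs; congr sz; apply/all_filterP/allP => z zs /=.
by apply/eqP => E; move: cs; rewrite -E zs.
Qed.

Lemma greedy (L : nat -> seq nat) m p : (forall i, i < m -> 1 < sz (L i)) ->
  exists f : nat -> nat, f m = p /\ forall i, i < m -> f i \in L i /\ f i != f i.+1.
Proof.
elim: m p => [|m IH] p H; first by exists (fun _ => p).
have [q [qL qp]] : exists q, q \in L m /\ q \notin [:: p] by apply: avail; apply: H.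
have [g [gm Hg]] := IH q (fun i im => H i (ltn_trans im (ltnSn m))).
exists (fun i => if i == m.+1 then p else g i); rewrite eqxx; split => // i im.
rewrite (ltn_eqF im) eqSS.
case: (eqVneq i m) => [->|im']; first by rewrite gm; move: qp; rewrite inE.
by apply: Hg; lia.
Qed.

Lemma degN_lt m v : v.+1 < m -> degN m.+1 v = degN m v.
Proof. rewrite /degN; lia. Qed.
Lemma degN_last m : 0 < m -> degN m.+1 m.-1 = (degN m m.-1).+1.
Proof. rewrite /degN; lia. Qed.

Section Lift.
Variables (m : nat) (L L' : nat -> seq nat) (c : nat).
Hypotheses (HL : forall i, i < m -> {subset L' i <= L i})
           (Hc : 0 < m -> c \notin L' m.-1) (HcL : c \in L m).

Lemma lift_col a : colN m L' a -> colN m.+1 L (upd a m c).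
Proof.
move=> [H1 H2]; rewrite /upd; split => v vn.
  case: eqP => [->|/eqP vm] //; have vm2 : v < m by lia.
  by apply: HL => //; apply: H1.
have -> : (v == m) = false by apply/negbTE; lia.
case: (eqVneq v.+1 m) => [E|vm].
  have : a v \in L' m.-1 by rewrite -E /=; apply: H1; lia.
  by apply: contraTneq => ->; apply: Hc; lia.
apply: H2; lia.
Qed.

Lemma lift_step a b : stepN m L' a b -> stepN m.+1 L (upd a m c) (upd b m c).
Proof.
move=> [ca cb [v Hv]]; split; try exact: lift_col.
exists v => u un uv; rewrite /upd; case: eqP => [//|/eqP um]; apply: Hv => //; lia.
Qed.

Lemma lift_rc a b : rcN m L' a b -> rcN m.+1 L (upd a m c) (upd b m c).
Proof. apply: (rc_map (F := fun f => upd f m c)) => x y; exact: lift_step. Qed.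
End Lift.

Lemma Lrm_sub L u c i : {subset Lrm L u c i <= L i}.
Proof. by rewrite /Lrm; case: eqP => [_ z|_ //]; rewrite mem_filter => /andP []. Qed.

Lemma Lrm_notin L u c : c \notin Lrm L u c u.
Proof. by rewrite /Lrm eqxx mem_filter /= eqxx. Qed.

Lemma lift_rc_rm m L c a b : c \in L m -> rcN m (Lrm L m.-1 c) a b ->
  rcN m.+1 L (upd a m c) (upd b m c).
Proof.
move=> cL; apply: lift_rc => //; [move=> i _; exact: Lrm_sub | move=> _; exact: Lrm_notin].
Qed.

Lemma res_col m L c a : colN m.+1 L a -> a m = c -> colN m (Lrm L m.-1 c) a.
Proof.
move=> [H1 H2] am; split => v vm; last by apply: H2; lia.
rewrite /Lrm; case: eqP => [E|_]; last by apply: H1; lia.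
rewrite mem_filter H1 /= ?andbT; last by lia.
rewrite -am; have -> : m = v.+1 by lia.
exact: H2.
Qed.

Lemma ok_rm m L c : okN m.+1 L -> okN m (Lrm L m.-1 c).
Proof.
move=> H v vm; rewrite /Lrm; case: eqP => [E|/eqP ne].
  have := H v (ltn_trans vm (ltnSn m)); have := sz_filter (L v) c.
  rewrite E degN_last; [lia|lia].
rewrite -degN_lt; last by lia.
apply: H; lia.
Qed.

Lemma slack_rm m L c s : s < m -> (degN m.+1 s).+1 < sz (L s) ->
  (degN m s).+1 < sz (Lrm L m.-1 c s).
Proof.
move=> sm H; rewrite /Lrm; case: eqP => [E|/eqP ne].
  have := sz_filter (L s) c; move: H; rewrite E degN_last; [lia|lia].
by rewrite -degN_lt; last by lia.
Qed.

Definition rv {A} (n : nat) (f : nat -> A) := fun i => f (n.-1 - i).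

Lemma rv_col n L a : colN n L a -> colN n (rv n L) (rv n a).
Proof.
move=> [H1 H2]; rewrite /rv; split => v vn; first by apply: H1; lia.
have -> : n.-1 - v = (n.-1 - v.+1).+1 by lia.
rewrite eq_sym; apply: H2; lia.
Qed.

Lemma rv_col' n L a : colN n (rv n L) a -> colN n L (rv n a).
Proof.
move=> [H1 H2]; rewrite /rv; split => v vn.
  have := H1 (n.-1 - v); rewrite /rv (_ : n.-1 - (n.-1 - v) = v); last by lia.
  apply; lia.
have -> : n.-1 - v = (n.-1 - v.+1).+1 by lia.
rewrite eq_sym; apply: H2; lia.
Qed.

Lemma rv_step n L a b : stepN n (rv n L) a b -> stepN n L (rv n a) (rv n b).
Proof.
move=> [ca cb [v Hv]]; split; try exact: rv_col'.
exists (n.-1 - v) => u un uv; rewrite /rv; apply: Hv; lia.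
Qed.

Lemma rv_ok n L : okN n L -> okN n (rv n L).
Proof.
move=> H v vn; rewrite /rv; have := H (n.-1 - v).
rewrite /degN; have -> : (0 < n.-1 - v) + ((n.-1 - v).+1 < n) = (0 < v) + (v.+1 < n) by lia.
apply; lia.
Qed.

Definition thmS_stmt n := forall L, okN n L -> slackN n L ->
  forall a b, colN n L a -> colN n L b -> rcN n L a b.

Lemma nbc_last m f : nbc m.+2 f m.+1 = [:: f m].
Proof. by rewrite /nbc /= ltnn. Qed.

Lemma S_step m : thmS_stmt m.+1 ->
  forall L, okN m.+2 L -> forall s, s <= m -> (degN m.+2 s).+1 < sz (L s) ->
  forall a b, colN m.+2 L a -> colN m.+2 L b -> rcN m.+2 L a b.
Proof.
move=> IH L ok s sm sl a b ca cb.
have slk : forall c, slackN m.+1 (Lrm L m c).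
  move=> c; exists s; split; first by lia.
  by apply: (slack_rm (m := m.+1)).
have [c ec] : exists c, b m.+1 = c by eexists.
have cL : c \in L m.+1 by rewrite -ec; apply: cb.1.
have [a1 [ra1 ca1 a1w]] : exists a1, [/\ rcN m.+2 L a a1, colN m.+2 L a1 & a1 m.+1 = c].
  case: (eqVneq (a m) c) => [amc|amc].
    set aw := a m.+1.
    have awc : aw != c by rewrite -amc eq_sym; apply: ca.2.
    have [p [pL pn]] : exists p, p \in L m /\ p \notin [:: c; aw].
      apply: avail => /=.
      have := ok m (ltnW (ltnSn m.+1)); have : s < m \/ s = m by lia.
      case=> [sm'|E]; first by rewrite /degN; lia.
      by move: sl; rewrite E /degN; lia.
    have [f [fm Hf]] : exists f : nat -> nat, f m = p /\
        forall i, i < m -> f i \in L i /\ f i != f i.+1.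
      apply: greedy => i im; have := ok i (ltn_trans im (ltn_trans (ltnSn m) (ltnSn m.+1))).
      rewrite /degN; lia.
    have cf : colN m.+1 (Lrm L m aw) f.
      split => v vm.
        rewrite /Lrm; case: eqP => [->|ne].
          by rewrite fm mem_filter pL /= andbT; move: pn; rewrite !inE negb_or => /andP [].
        have vm' : v < m by lia.
        by case: (Hf v vm').
      have vm' : v < m by lia.
      by case: (Hf v vm').
    have caa : colN m.+1 (Lrm L m aw) a by apply: (res_col (m := m.+1)).
    have r1 := IH _ (ok_rm (m := m.+1) aw ok) (slk aw) _ _ caa cf.
    have r2 := lift_rc_rm (m := m.+1) (ca.1 _ (ltnSn _)) r1.
    have cg : colN m.+2 L (upd f m.+1 aw).
      apply: (lift_col (L' := Lrm L m aw)) => //; [by move=> i _; apply: Lrm_sub|by move=> _; apply: Lrm_notin|by apply: ca.1].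
    exists (upd (upd f m.+1 aw) m.+1 c); split.
    - apply: rc_trans (rc_trans _ r2) _.
        by apply: rc_eq ca _ => i _; rewrite /upd; case: eqP => // ->.
      apply: rc_upd cg _ cL _ => //.
      rewrite nbc_last inE /upd (ltn_eqF (ltnSn m)) fm.
      by move: pn; rewrite !inE negb_or eq_sym => /andP [].
    - apply: upd_col cg _ cL _ => //.
      rewrite nbc_last inE /upd (ltn_eqF (ltnSn m)) fm.
      by move: pn; rewrite !inE negb_or eq_sym => /andP [].
    - by rewrite /upd eqxx.
  exists (upd a m.+1 c); split.
  - by apply: rc_upd => //; rewrite nbc_last inE eq_sym.
  - by apply: upd_col => //; rewrite nbc_last inE eq_sym.
  - by rewrite /upd eqxx.
apply: rc_trans ra1 _.
have c1 : colN m.+1 (Lrm L m c) a1 by apply: (res_col (m := m.+1)).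
have c2 : colN m.+1 (Lrm L m c) b by apply: (res_col (m := m.+1)).
have r := lift_rc_rm (m := m.+1) cL (IH _ (ok_rm (m := m.+1) c ok) (slk c) _ _ c1 c2).
apply: rc_trans (rc_trans _ r) _.
  by apply: rc_eq ca1 _ => i _; rewrite /upd; case: eqP => // ->.
apply: rc_sym; apply: rc_eq cb _ => i _; rewrite /upd; case: eqP => // ->.
by rewrite ec.
Qed.

Lemma rvK n (a : nat -> nat) i : i < n -> rv n (rv n a) i = a i.
Proof. move=> i_n; rewrite /rv; congr a; lia. Qed.

Theorem thmS n : 0 < n -> thmS_stmt n.
Proof.
case: n => // m _; elim: m => [|m IH] L ok [s [sn sl]] a b ca cb.
  apply: rt_step; split => //; exists 0 => u; by case: u.
have : s <= m \/ s = m.+1 by lia.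
case=> [sm|E]; first exact: (S_step IH ok sm sl).
have r : rcN m.+2 (rv m.+2 L) (rv m.+2 a) (rv m.+2 b).
  apply: (S_step IH (rv_ok ok) (s := 0)) => //; try exact: rv_col.
  rewrite /rv subn0 /=.
  have -> : degN m.+2 0 = degN m.+2 s by rewrite E /degN; lia.
  by rewrite E in sl *.
have r2 := rc_map (F := rv m.+2) (@rv_step _ L) r.
apply: rc_trans (rc_trans _ r2) _.
  by apply: rc_eq ca _ => i i_n; rewrite rvK.
apply: rc_sym; apply: rc_eq cb _ => i i_n; by rewrite rvK.
Qed.

Lemma frozen_nb n L f y x o : okN n L -> y < n -> ~ freeN n L f y ->
  {subset nbc n f y <= x :: o} -> (size o).+1 <= degN n y -> x \in L y /\ x \notin o.
Proof.
move=> ok yn nf sub so.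
have [z [zL zn]] : exists z, z \in L y /\ z \notin f y :: o.
  by apply: avail; apply: leq_ltn_trans so (ok y yn).
move: zn; rewrite inE negb_or => /andP [zfy zo].
case: (boolP (z \in nbc n f y)) => zN; last by case: nf; exists z; split.
move: (sub z zN); rewrite inE (negbTE zo) orbF => /eqP zx.
by rewrite -zx.
Qed.

Lemma FP n L f v y : okN n L -> colN n L f -> v < n -> y < n -> freeN n L f v ->
  (y = v.+1 \/ v = y.+1) ->
  exists g, [/\ rcN n L f g, colN n L g, freeN n L g y & forall i, i != v -> g i = f i].
Proof.
move=> ok cf vn yn [z [zL zv zn]] yv.
case: (classic (freeN n L f y)) => fy.
  by exists f; split => //; apply: rc_refl.
exists (upd f v z); split.
- exact: rc_upd.
- exact: upd_col.
- case: yv => E; [subst y | subst v].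
  + set o := if v.+2 < n then [:: f v.+2] else [::].
    have [xL xo] : f v \in L v.+1 /\ f v \notin o.
      apply: (frozen_nb ok yn fy); last by rewrite /o /degN; case: ifP.
      by rewrite /nbc /= => q.
    exists (f v); split => //.
      by rewrite /upd (gtn_eqF (ltnSn v)); apply: cf.2.
    rewrite /nbc /= inE negb_or /upd eqxx eq_sym zv /=.
    move: xo; rewrite /o; case: ifP => // _.
    by rewrite !inE (gtn_eqF (ltn_trans (ltnSn v) (ltnSn v.+1))).
  + set o := if 0 < y then [:: f y.-1] else [::].
    have [xL xo] : f y.+1 \in L y /\ f y.+1 \notin o.
      apply: (frozen_nb ok yn fy); last by rewrite /o /degN; case: ifP => /=; rewrite vn.
      by rewrite /nbc vn => q; rewrite mem_cat !inE orbC.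
    exists (f y.+1); split => //.
      by rewrite /upd (ltn_eqF (ltnSn y)) eq_sym; apply: cf.2.
    rewrite /nbc vn mem_cat negb_or !inE /upd eqxx [f y.+1 == z]eq_sym zv andbT.
    move: xo; rewrite /o; case: ifP => // y0.
    rewrite !inE (_ : (y.-1 == y.+1) = false) //; apply/negbTE; lia.
- by move=> i iv; rewrite /upd (negbTE iv).
Qed.

Lemma walk n L k : forall v f, okN n L -> colN n L f -> v + k < n -> freeN n L f v ->
  exists g, [/\ rcN n L f g, colN n L g, freeN n L g (v + k) &
                 forall i, v + k <= i -> g i = f i].
Proof.
elim: k => [|k IH] v f ok cf vk fv.
  by exists f; rewrite addn0; split => //; apply: rc_refl.
have vn : v < n by lia.
have yn : v.+1 < n by lia.
have [g1 [r1 c1 f1 e1]] := FP ok cf vn yn fv (or_introl erefl).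
have h : v.+1 + k < n by lia.
have [g [r c fg eg]] := IH v.+1 g1 ok c1 h f1.
exists g; rewrite addnS -addSn; split => //; first exact: rc_trans r1 r.
move=> i ik; rewrite eg // e1 //; apply/eqP; lia.
Qed.

Ltac prune := repeat match goal with
  | H : is_true (~~ _) |- _ => clear H
  | H : is_true (_ \in _) |- _ => clear H
  | H : {subset _ <= _} |- _ => clear H
  end.
Ltac lia' := prune; lia.

Ltac simpl_eqs :=
  repeat match goal with
  | |- context [?a == ?b] =>
      (rewrite (_ : (a == b) = false); last by (apply/negbTE; lia')) ||
      (rewrite (_ : (a == b) = true); last by (apply/eqP; lia'))
  end.

Lemma nbc_u k f : nbc k.+3 f k.+1 = [:: f k; f k.+2].
Proof. by rewrite /nbc ltnSn. Qed.
Lemma nbc_w k f : nbc k.+3 f k.+2 = [:: f k.+1].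
Proof. exact: (nbc_last (k.+1)). Qed.

Lemma union_small n L (t : seq nat) : union4 n L ->
  (forall v, v < n -> {subset L v <= t}) -> size t < 4 -> False.
Proof.
move=> [s [us s4 Hs]] sub st.
have : size s <= size t.
  apply: uniq_leq_size => // z zs; have [v [vn zv]] := Hs z zs; exact: sub v vn z zv.
lia.
Qed.

Section Tight.
Variables (k : nat) (L : nat -> seq nat) (c d e : nat).
Hypotheses (ok : okN k.+3 L) (cd : c != d) (ec : e != c) (ed : e != d)
  (cw : c \in L k.+2) (dw : d \in L k.+2) (Lw : {subset L k.+2 <= [:: c; d]})
  (cu : c \in L k.+1) (du : d \in L k.+1) (eu : e \in L k.+1)
  (Lu : {subset L k.+1 <= [:: c; d; e]}).

Lemma colw f : colN k.+3 L f -> f k.+2 = c \/ f k.+2 = d.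
Proof. move=> cf; have := Lw (cf.1 k.+2 (ltnSn _)); rewrite !inE => /orP [] /eqP; tauto. Qed.
Lemma colu f : colN k.+3 L f -> [\/ f k.+1 = c, f k.+1 = d | f k.+1 = e].
Proof.
move=> cf; have := Lu (cf.1 k.+1 ltac:(lia)).
by rewrite !inE => /orP [/eqP|/orP [/eqP|/eqP]]; [constructor 1|constructor 2|constructor 3].
Qed.
Lemma adj_uw f : colN k.+3 L f -> f k.+1 != f k.+2.
Proof. by move=> cf; apply: cf.2. Qed.

Section C1.
Hypothesis (cx : c \notin L k).

Lemma R_d a : colN k.+3 L a -> a k.+2 = d ->
  exists a1, [/\ rcN k.+3 L a a1, colN k.+3 L a1 & a1 k.+1 = c].
Proof.
move=> ca aw.
case: (eqVneq (a k.+1) c) => [au|au]; first by exists a; split => //; apply: rc_refl.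
have cn : c \notin nbc k.+3 a k.+1.
  rewrite nbc_u !inE aw negb_or cd andbT.
  apply/eqP => E; move: cx; rewrite E.
  by have -> := ca.1 k ltac:(lia).
exists (upd a k.+1 c); split; [exact: rc_upd| exact: upd_col|by rewrite /upd eqxx].
Qed.

Lemma R_e a : colN k.+3 L a -> a k.+2 = c -> a k.+1 = e ->
  exists a1, [/\ rcN k.+3 L a a1, colN k.+3 L a1 & a1 k.+1 = c].
Proof.
move=> ca aw au.
have dn : d \notin nbc k.+3 a k.+2 by rewrite nbc_w inE au eq_sym.
have c2 := upd_col ca (ltnSn _) dw dn.
have [a1 [r1 c1 e1]] := R_d c2 ltac:(by rewrite /upd eqxx).
by exists a1; split => //; apply: rc_trans r1; apply: rc_upd.
Qed.

Lemma R_dx a : colN k.+3 L a -> a k.+2 = c -> a k.+1 = d -> a k != e ->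
  exists a1, [/\ rcN k.+3 L a a1, colN k.+3 L a1 & a1 k.+1 = c].
Proof.
move=> ca aw au ax.
have en : e \notin nbc k.+3 a k.+1 by rewrite nbc_u !inE aw negb_or ec andbT eq_sym.
have c2 := upd_col ca (ltnW (ltnSn _)) eu en.
have [a1 [r1 c1 e1]] := R_e c2 ltac:(by rewrite /upd; simpl_eqs) ltac:(by rewrite /upd eqxx).
by exists a1; split => //; apply: rc_trans r1; apply: rc_upd.
Qed.

Lemma R_all a : colN k.+3 L a -> unfrN k.+3 L a ->
  exists a1, [/\ rcN k.+3 L a a1, colN k.+3 L a1 & a1 k.+1 = c].
Proof.
move=> ca [v [vn fv]].
case: (colw ca) => aw; last exact: R_d.
case: (colu ca) => au.
- by move: (adj_uw ca); rewrite au aw eqxx.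
- case: (eqVneq (a k) e) => ax; last exact: R_dx.
  have vk : v <= k.
    case: fv => z [zL zv zn].
    have : v = k.+2 \/ v = k.+1 \/ v <= k by lia.
    case=> [E|[E|//]]; subst v.
    + move: (Lw zL) zn zv; rewrite nbc_w au aw !inE.
      by case/orP => /eqP ->; rewrite ?eqxx.
    + move: (Lu zL) zn zv; rewrite nbc_u au aw ax !inE.
      by case/orP => [/eqP ->|/orP [] /eqP ->]; rewrite ?eqxx ?orbT.
  have vkk : v + (k - v) < k.+3 by lia.
  have [g [rg cg fg eg]] := walk ok ca vkk fv.
  rewrite (_ : v + (k - v) = k) in fg eg; last by lia.
  have gx : g k = e by rewrite eg.
  have gu : g k.+1 = d by rewrite eg //; lia.
  have gw : g k.+2 = c by rewrite eg //; lia.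
  case: fg => z [zL zg zn].
  have kn : k < k.+3 by lia.
  have c2 := upd_col cg kn zL zn.
  have [a1 [r1 c1 e1]] := R_dx c2 ltac:(by rewrite /upd; simpl_eqs) ltac:(by rewrite /upd; simpl_eqs)
     ltac:(by rewrite /upd eqxx -gx).
  exists a1; split => //; apply: rc_trans rg (rc_trans _ r1); exact: rc_upd cg kn zL zn.
- exact: R_e.
Qed.

Lemma hub_conn a b : colN k.+3 L a -> colN k.+3 L b -> a k.+1 = c -> b k.+1 = c ->
  rcN k.+3 L a b.
Proof.
have wd f : colN k.+3 L f -> f k.+1 = c -> f k.+2 = d.
  move=> cf fu; case: (colw cf) => // fw.
  by move: (adj_uw cf); rewrite fu fw eqxx.
move=> ca cb au bu.
set L1 := Lrm L k.+1 d.
set L2 := Lrm L1 k c.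
have ca1 : colN k.+2 L1 a by apply: (res_col (m := k.+2)) => //; apply: wd.
have cb1 : colN k.+2 L1 b by apply: (res_col (m := k.+2)) => //; apply: wd.
have ca2 : colN k.+1 L2 a by apply: (res_col (m := k.+1)).
have cb2 : colN k.+1 L2 b by apply: (res_col (m := k.+1)).
have ok1 : okN k.+2 L1 := ok_rm (m := k.+2) d ok.
have ok2 : okN k.+1 L2 := ok_rm (m := k.+1) c ok1.
have sl2 : slackN k.+1 L2.
  exists k; split => //.
  rewrite /L2 /L1 /Lrm eqxx (ltn_eqF (ltnSn k)) sz_filter_id //.
  have kk : k < k.+3 by lia.
  have := ok kk; rewrite /degN; lia.
have r := thmS (ltn0Sn _) ok2 sl2 ca2 cb2.
have cL1 : c \in L1 k.+1 by rewrite /L1 /Lrm eqxx mem_filter /= cd.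
have r1 := lift_rc_rm (m := k.+1) cL1 r.
have r2 := lift_rc_rm (m := k.+2) dw r1.
apply: rc_trans (rc_trans _ r2) _.
  apply: (rc_eq ca) => i _; rewrite /upd; case: eqP => [->|_]; first by rewrite (wd a ca au).
  by case: eqP => // ->.
apply: rc_sym; apply: (rc_eq cb) => i _; rewrite /upd; case: eqP => [->|_]; first by rewrite (wd b cb bu).
by case: eqP => // ->.
Qed.

Lemma C1 a b : colN k.+3 L a -> colN k.+3 L b -> unfrN k.+3 L a -> unfrN k.+3 L b ->
  rcN k.+3 L a b.
Proof.
move=> ca cb ua ub.
have [a1 [ra c1 e1]] := R_all ca ua.
have [b1 [rb d1 f1]] := R_all cb ub.
apply: rc_trans ra (rc_trans (hub_conn c1 d1 e1 f1) _); exact: rc_sym.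
Qed.
End C1.

Definition Mstmt n := forall L, okN n L -> union4 n L ->
  forall a b, colN n L a -> colN n L b -> unfrN n L a -> unfrN n L b -> rcN n L a b.

Lemma nbc_sub m f v : {subset nbc m f v <= nbc m.+1 f v}.
Proof.
move=> q; rewrite /nbc !mem_cat => /orP [->//|]; case: ifP => // h.
have h' : v.+1 < m.+1 by lia.
by rewrite h' => ->; rewrite orbT.
Qed.

Lemma free_res m L0 f v : v < m -> freeN m.+1 L0 f v -> freeN m (Lrm L0 m.-1 (f m)) f v.
Proof.
move=> vm [z [zL zv zn]]; exists z; split => //.
  rewrite /Lrm; case: eqP => [E|_] //; rewrite mem_filter zL andbT /=.
  apply: contra zn => /eqP ->; rewrite /nbc mem_cat (_ : v.+1 < m.+1); last by lia.
  by rewrite (_ : m = v.+1) ?inE ?eqxx ?orbT //; lia.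
by apply: contra zn; apply: nbc_sub.
Qed.

Section C2.
Hypotheses (cx : c \in L k) (dx : d \in L k) (un : union4 k.+3 L) (IH : Mstmt k.+2).

Definition good f := exists v, v < k.+2 /\ freeN k.+3 L f v.

Lemma C2a a : colN k.+3 L a -> unfrN k.+3 L a ->
  exists a1, [/\ rcN k.+3 L a a1, colN k.+3 L a1 & good a1].
Proof.
move=> ca [v [vn fv]].
case: (ltnP v k.+2) => vk.
  by exists a; split => //; [apply: rc_refl | exists v].
have E : v = k.+2 by lia.
subst v.
have yn : k.+1 < k.+3 by lia.
have [g [r cg fg _]] := FP ok ca vn yn fv (or_intror erefl).
by exists g; split => //; exists k.+1.
Qed.

Lemma union_rm c' : c' \in L k -> union4 k.+2 (Lrm L k.+1 c').
Proof.
move=> c'x; case: un => s [us s4 Hs]; exists s; split => // z zs.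
have [v [vn zv]] := Hs z zs.
have Lx : forall j, j = k -> Lrm L k.+1 c' j = L k.
  by move=> j ->; rewrite /Lrm (ltn_eqF (ltnSn k)).
have : v <= k \/ v = k.+1 \/ v = k.+2 by clear -vn; lia.
case=> [vk|[E|E]]; subst.
- exists v; split; first by clear -vk; lia.
  by rewrite /Lrm (_ : (v == k.+1) = false) //; apply/negbTE; clear -vk; lia.
- case: (eqVneq z c') => [->|zc]; first by exists k; split; [clear; lia | rewrite Lx].
  by exists k.+1; split => //; rewrite /Lrm eqxx mem_filter /= zc.
- exists k; split; first by clear; lia.
  rewrite Lx //; move: (Lw zv); rewrite !inE => /orP [] /eqP -> //.
Qed.

Lemma C2b c' a b : c' \in L k -> c' \in L k.+2 -> colN k.+3 L a -> colN k.+3 L b ->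
  a k.+2 = c' -> b k.+2 = c' -> good a -> good b -> rcN k.+3 L a b.
Proof.
move=> c'x c'w ca cb aw bw [va [vaa fa]] [vb [vbb fb]].
have ca1 : colN k.+2 (Lrm L k.+1 c') a by apply: (res_col (m := k.+2)).
have cb1 : colN k.+2 (Lrm L k.+1 c') b by apply: (res_col (m := k.+2)).
have ua : unfrN k.+2 (Lrm L k.+1 c') a.
  by exists va; split => //; rewrite -aw; apply: (free_res (m := k.+2)).
have ub : unfrN k.+2 (Lrm L k.+1 c') b.
  by exists vb; split => //; rewrite -bw; apply: (free_res (m := k.+2)).
have r := IH (ok_rm (m := k.+2) c' ok) (union_rm c'x) ca1 cb1 ua ub.
have r2 := lift_rc_rm (m := k.+2) c'w r.
apply: rc_trans (rc_trans _ r2) _.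
  by apply: (rc_eq ca) => i _; rewrite /upd; case: eqP => // ->.
by apply: rc_sym; apply: (rc_eq cb) => i _; rewrite /upd; case: eqP => // ->.
Qed.

Lemma C2c : exists psi, [/\ colN k.+3 L psi, psi k.+2 = c, good psi,
   colN k.+3 L (upd psi k.+2 d) & good (upd psi k.+2 d)].
Proof.
have dc : d != c by rewrite eq_sym.
have de : d != e by rewrite eq_sym.
have deg1 : forall i, i < k -> 1 < sz (L i).
  move=> i ik; have ik3 : i < k.+3 by lia'.
  by have := ok ik3; rewrite /degN; lia'.
have finish : forall psi, colN k.+3 L psi -> psi k.+2 = c -> psi k.+1 = e ->
   good psi -> good (upd psi k.+2 d) ->
   exists psi, [/\ colN k.+3 L psi, psi k.+2 = c, good psi,
   colN k.+3 L (upd psi k.+2 d) & good (upd psi k.+2 d)].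
  move=> psi cp pw pu g1 g2; exists psi; split => //.
  by apply: upd_col => //; rewrite nbc_w inE pu eq_sym.
case: (boolP (has (fun z => z \notin [:: c; d; e]) (L k))) => [/hasP [p pL pn]|hn].
  have [f [fk Hf]] := greedy p deg1.
  move: pn; rewrite !inE !negb_or => /and3P [pc pd pe].
  apply: (finish (fun i => if i == k.+2 then c else if i == k.+1 then e else f i)).
  - split => v vn /=.
      have : v < k \/ v = k \/ v = k.+1 \/ v = k.+2 by lia'.
      case=> [vk|[->|[->|->]]]; simpl_eqs => //; last by rewrite fk.
      by case: (Hf v vk).
    have : v.+1 <= k \/ v = k \/ v = k.+1 by lia'.
    case=> [vk|[->|->]]; simpl_eqs => //; first by case: (Hf v vk).
    by rewrite fk.
  - by rewrite /= eqxx.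
  - by simpl_eqs.
  - exists k.+1; split => //; exists d; rewrite nbc_u /=; simpl_eqs.
    by rewrite fk !inE negb_or du eq_sym ed eq_sym pd /= eq_sym.
  - exists k.+1; split => //; exists c; rewrite nbc_u /= /upd /=; simpl_eqs.
    by rewrite fk !inE negb_or cu eq_sym ec eq_sym pc /= cd.
have Lx : {subset L k <= [:: c; d; e]}.
  by move/hasPn: hn => hn z zL; have := hn z zL; rewrite negbK.
case: (posnP k) => [k0|kpos].
  apply: (finish (fun i => if i == k.+1 then e else c)).
  - split => v vn /=.
      have : v = k \/ v = k.+1 \/ v = k.+2 by lia'.
      by case=> [->|[->|->]]; simpl_eqs.
    have : v = k \/ v = k.+1 by lia'.
    by case=> [->|->]; simpl_eqs; rewrite // eq_sym.
  - by simpl_eqs.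
  - by simpl_eqs.
  - have k0' : (0 < k) = false by rewrite k0.
    have h3 : k.+1 < k.+3 by lia'.
    exists k; split => //; exists d; rewrite /nbc k0' h3 /=; simpl_eqs.
    by rewrite !inE dx eq_sym cd eq_sym ed.
  - have k0' : (0 < k) = false by rewrite k0.
    have h3 : k.+1 < k.+3 by lia'.
    exists k; split => //; exists d; rewrite /nbc k0' h3 /upd /=; simpl_eqs.
    by rewrite !inE dx eq_sym cd eq_sym ed.
have [j kj] : exists j, k = j.+1 by exists k.-1; lia'.
case: (boolP (has (fun z => z \notin [:: c; d]) (L j))) => [/hasP [q qL qn]|hn2].
  have [f [fj Hf]] := greedy q (fun i (ij : i < j) => deg1 i ltac:(lia')).
  move: qn; rewrite !inE !negb_or => /andP [qc qd].
  have dq : d != q by rewrite eq_sym.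
  apply: (finish (fun i => if i == k.+2 then c else if i == k.+1 then e else
                   if i == k then c else f i)).
  - split => v vn /=.
      have : v < j \/ v = j \/ v = k \/ v = k.+1 \/ v = k.+2 by lia'.
      case=> [vk|[->|[->|[->|->]]]]; simpl_eqs => //; last by rewrite fj.
      by case: (Hf v vk).
    have : v.+1 <= j \/ v = j \/ v = k \/ v = k.+1 by lia'.
    case=> [vk|[->|[->|->]]]; simpl_eqs => //; first by case: (Hf v vk).
    by rewrite fj.
    by rewrite eq_sym.
  - by rewrite /= eqxx.
  - by simpl_eqs.
  - have h3 : k.+1 < k.+3 by lia'.
    exists k; split => //; exists d; rewrite /nbc kpos h3 /=; simpl_eqs.
    rewrite (_ : k.-1 = j); last by lia'.
    by rewrite fj !inE negb_or dx dc dq de.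
  - have h3 : k.+1 < k.+3 by lia'.
    exists k; split => //; exists d; rewrite /nbc kpos h3 /upd /=; simpl_eqs.
    rewrite (_ : k.-1 = j); last by lia'.
    by rewrite fj !inE negb_or dx dc dq de.
exfalso.
have Lj : {subset L j <= [:: c; d]}.
  by move/hasPn: hn2 => hn3 z zL; have := hn3 z zL; rewrite negbK.
have j0 : j = 0.
  have jn : j < k.+3 by lia'.
  have := ok jn; have := sz_sub Lj; rewrite /degN /=; lia'.
apply: (union_small un (t := [:: c; d; e])) => // v vn.
have : v = 0 \/ v = 1 \/ v = 2 \/ v = 3 by lia'.
case=> [->|[->|[->|->]]] z.
- rewrite -j0 => /Lj; rewrite !inE => /orP [] ->; by rewrite ?orbT.
- by rewrite (_ : 1 = k) //; last lia'; apply: Lx.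
- by rewrite (_ : 2 = k.+1) //; last lia'; apply: Lu.
- rewrite (_ : 3 = k.+2); last lia'.
  move/Lw; rewrite !inE => /orP [] ->; by rewrite ?orbT.
Qed.

Lemma C2 a b : colN k.+3 L a -> colN k.+3 L b -> unfrN k.+3 L a -> unfrN k.+3 L b ->
  rcN k.+3 L a b.
Proof.
move=> ca cb ua ub.
have [psi [cp pw gp cp' gp']] := C2c.
have rp : rcN k.+3 L psi (upd psi k.+2 d).
  by apply: rt_step; split => //; exists k.+2 => u _ uv; rewrite /upd (negbTE uv).
have toP : forall a1, colN k.+3 L a1 -> good a1 -> rcN k.+3 L a1 psi.
  move=> a1 c1 g1; case: (colw c1) => a1w.
    by apply: (C2b cx cw) => //.
  apply: rc_trans (rc_sym rp).
  by apply: (C2b dx dw) => //; rewrite /upd eqxx.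
have [a1 [ra c1 g1]] := C2a ca ua.
have [b1 [rb d1 h1]] := C2a cb ub.
apply: rc_trans ra (rc_trans (toP _ c1 g1) _).
by apply: rc_sym; apply: rc_trans rb (toP _ d1 h1).
Qed.
End C2.
End Tight.

Theorem thmM n : 0 < n -> Mstmt n.
Proof.
case: n => // m _; elim: m => [|m IH] L ok un a b ca cb ua ub.
  apply: rt_step; split => //; exists 0 => u; by case: u.
case: (boolP ((2 < sz (L m.+1)) || ((degN m.+2 m).+1 < sz (L m)))) => [/orP hA|hA].
  apply: thmS => //; case: hA => h; [exists m.+1 | exists m]; split => //.
  by move: h; rewrite /degN; case: m {IH ok un ca cb ua ub} => //= *; rewrite ltnn.
case: (boolP (all (fun z => z \in L m) (L m.+1))) => [hall | /allPn [c cw cu]].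
  move: IH ok un ca cb ua ub hall hA; case: m => [|k] IH ok un ca cb ua ub hall hA.
    exfalso; apply: (union_small un (t := undup (L 0))).
      move=> v vn z; rewrite mem_undup; case: v vn => [|[|//]] _ //.
      by move=> zL; have := allP hall z zL.
    move: hA; rewrite negb_or => /andP [_]; rewrite -leqNgt /degN /= => h.
    exact: leq_ltn_trans h _.
  move: hA; rewrite negb_or -!leqNgt => /andP [hw hu].
  have hw2 : 1 < sz (L k.+2) by have := ok k.+2 (ltnSn _); rewrite /degN; lia'.
  have hu2 : 2 < sz (L k.+1) by have := ok k.+1 ltac:(lia'); rewrite /degN; lia'.
  have [c [cw _]] : exists c, c \in L k.+2 /\ c \notin [::] by apply: avail => /=; lia'.
  have [d [dw dc]] : exists d, d \in L k.+2 /\ d \notin [:: c] by apply: avail => /=; lia'.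
  move: dc; rewrite inE => dc.
  have cd : c != d by rewrite eq_sym.
  have Lw : {subset L k.+2 <= [:: c; d]}.
    move=> z zL; apply: contraT => zn.
    move: zn; rewrite !inE negb_or => /andP [zc zd].
    have : 3 <= sz (L k.+2).
      apply: (uniq_sz (t := [:: c; d; z])).
        by rewrite /= !inE !negb_or cd [c == z]eq_sym zc [d == z]eq_sym zd.
      by move=> q; rewrite !inE => /or3P [] /eqP ->.
    move: hw; clear; lia.
  have [e [eu en]] : exists e, e \in L k.+1 /\ e \notin [:: c; d] by apply: avail => /=; lia'.
  move: en; rewrite !inE negb_or => /andP [ec ed].
  have cu : c \in L k.+1 by apply: (allP hall).
  have du : d \in L k.+1 by apply: (allP hall).
  have Lu : {subset L k.+1 <= [:: c; d; e]}.
    move=> z zL; apply: contraT => zn.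
    move: zn; rewrite !inE !negb_or => /and3P [zc zd ze].
    have : 4 <= sz (L k.+1).
      apply: (uniq_sz (t := [:: c; d; e; z])).
        rewrite /= !inE !negb_or cd [c == e]eq_sym ec [d == e]eq_sym ed.
        by rewrite [c == z]eq_sym zc [d == z]eq_sym zd [e == z]eq_sym ze.
      by move=> q; rewrite !inE => /or4P [] /eqP ->.
    move: hu; rewrite /degN; clear; lia.
  case: (boolP ((c \in L k) && (d \in L k))) => [/andP [cx dx]|].
    exact: (C2 ok cd ec ed cw dw Lw cu du eu Lu cx dx un IH).
  rewrite negb_and => /orP [cx|dx].
    exact: (C1 ok cd ec ed cw dw Lw cu du eu Lu cx).
  have Lw' : {subset L k.+2 <= [:: d; c]}.
    by move=> z /Lw; rewrite !inE orbC.
  have Lu' : {subset L k.+1 <= [:: d; c; e]}.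
    by move=> z /Lu; rewrite !inE => /or3P [] ->; rewrite ?orbT.
  exact: (C1 ok (d := c) (c := d) ltac:(by rewrite eq_sym) ed ec dw cw Lw' du cu eu Lu' dx).
have cn : forall f, colN m.+2 L f -> c \notin nbc m.+2 f m.+1.
  move=> f cf; rewrite nbc_last inE; apply: contra cu => /eqP ->; apply: cf.1; lia'.
have ra := rc_upd ca (ltnSn _) cw (cn _ ca).
have rb := rc_upd cb (ltnSn _) cw (cn _ cb).
have ca' := upd_col ca (ltnSn _) cw (cn _ ca).
have cb' := upd_col cb (ltnSn _) cw (cn _ cb).
have c1 : colN m.+1 (Lrm L m c) (upd a m.+1 c) by apply: (res_col (m := m.+1)) => //; rewrite /upd eqxx.
have c2 : colN m.+1 (Lrm L m c) (upd b m.+1 c) by apply: (res_col (m := m.+1)) => //; rewrite /upd eqxx.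
have sl : slackN m.+1 (Lrm L m c).
  exists m; split => //; rewrite /Lrm eqxx sz_filter_id //.
  have := ok m ltac:(lia'); rewrite (degN_last (m := m.+1)) //.
have r := thmS (ltn0Sn _) (ok_rm (m := m.+1) c ok) sl c1 c2.
have r2 := lift_rc_rm (m := m.+1) cw r.
apply: rc_trans ra (rc_trans (rc_trans _ r2) _).
  by apply: (rc_eq ca') => i _; rewrite /upd; case: eqP.
apply: rc_trans (rc_sym rb).
by apply: rc_sym; apply: (rc_eq cb') => i _; rewrite /upd; case: eqP.
Qed.

Section Transfer.
Variables (m : nat) (L : 'I_m.+1 -> seq nat).
Let LN : nat -> seq nat := fun i => L (inord i).
Let F (f : nat -> nat) : 'I_m.+1 -> nat := fun i => f (nat_of_ord i).

Lemma adj_nat (u v : 'I_m.+1) : path_adj u v = (u.+1 == v :> nat) || (v.+1 == u :> nat).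
Proof. by []. Qed.

Lemma tr_col f : colN m.+1 LN f -> is_Lcol L (F f).
Proof.
move=> [H1 H2]; split => [v|u v].
  by have := H1 v (ltn_ord v); rewrite /LN inord_val.
rewrite adj_nat => /orP [] /eqP E; apply/eqP; rewrite /F -E.
  by apply: H2; rewrite E.
by rewrite eq_sym; apply: H2; rewrite E.
Qed.

Lemma tr_step x y : stepN m.+1 LN x y -> recol_step L (F x) (F y).
Proof.
move=> [cx cy [v Hv]]; split; first exact: tr_col.
split; first exact: tr_col.
exists (inord v) => u uv; rewrite /F; apply: Hv; first exact: ltn_ord.
apply/eqP => E; apply: uv; apply: val_inj; rewrite /= inordK // -E; exact: ltn_ord.
Qed.

Lemma tr_rc x y : rcN m.+1 LN x y -> clos_refl_trans _ (@recol_step m.+1 L) (F x) (F y).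
Proof.
elim=> [a b H|a|a b c _ H1 _ H2].
- exact/rt_step/tr_step.
- exact: rt_refl.
- exact: rt_trans H1 H2.
Qed.

Lemma from_col (al : 'I_m.+1 -> nat) : is_Lcol L al -> colN m.+1 LN (fun i => al (inord i)).
Proof.
move=> [H1 H2]; split => v vn; first exact: H1.
apply/eqP; apply: H2; rewrite adj_nat !inordK //; last by lia.
by rewrite eqxx.
Qed.

Lemma from_ok : (forall v : 'I_m.+1, path_deg v + 1 <= list_size (L v)) -> okN m.+1 LN.
Proof.
move=> H v vn; have := H (inord v); rewrite /LN /list_size -/(sz _).
suff : degN m.+1 v <= path_deg (inord v : 'I_m.+1) by lia.
rewrite /path_deg; apply/card_geqP.
exists ((if 0 < v then [:: inord v.-1] else [::]) ++ (if v.+1 < m.+1 then [:: inord v.+1] else [::])).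
split.
- case: ifP => h1; case: ifP => h2 //=; rewrite andbT inE.
  apply/eqP => /(congr1 val); rewrite /= !inordK; lia.
- by rewrite size_cat /degN; case: (0 < v); case: (v.+1 < m.+1).
- move=> u; rewrite mem_cat => /orP []; case: ifP => h //; rewrite inE => /eqP ->;
    rewrite inE adj_nat !inordK //; try lia.
Qed.

Lemma from_unfr (al : 'I_m.+1 -> nat) : is_Lcol L al -> unfrozen L al ->
  unfrN m.+1 LN (fun i => al (inord i)).
Proof.
move=> cal [v nf].
have [c [cL [cv cn]]] : exists c, c \in L v /\ c <> al v /\
    forall u, path_adj v u -> al u <> c.
  apply: NNPP => H; apply: nf => c cL cv; apply: NNPP => H2; apply: H.
  by exists c; split => //; split => // u uv E; apply: H2; exists u.
exists v; split; first exact: ltn_ord.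
have vm := ltn_ord v.
exists c; split.
- by rewrite /LN inord_val.
- by rewrite inord_val; apply/eqP.
- rewrite /nbc mem_cat negb_or; apply/andP; split; case: ifP => h //; rewrite inE.
  + apply/eqP => E; apply: (cn (inord v.-1)); last by rewrite E.
    rewrite adj_nat !inordK; lia.
  + apply/eqP => E; apply: (cn (inord v.+1)); last by rewrite E.
    rewrite adj_nat !inordK; lia.
Qed.

Lemma from_union : 4 <= union_size L -> union4 m.+1 LN.
Proof.
rewrite /union_size => H.
exists (undup (flatten [seq L v | v <- enum 'I_m.+1])); split => //.
  exact: undup_uniq.
move=> z; rewrite mem_undup => /flattenP [s /mapP [v _ ->] zv].
by exists (nat_of_ord v); split; [exact: ltn_ord | rewrite /LN inord_val].
Qed.

End Transfer.

Unset Implicit Arguments.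

Theorem mainTheorem13 (n : nat) (L : 'I_n -> seq nat) (alpha beta : 'I_n -> nat) :
  3 <= n ->
  (forall v : 'I_n, path_deg v + 1 <= list_size (L v)) ->
  is_Lcol L alpha -> is_Lcol L beta ->
  unfrozen L alpha -> unfrozen L beta ->
  4 <= union_size L ->
  reconf L alpha beta.
Proof.
case: n L alpha beta => [//|m] L al be _ hdeg ca cb ua ub hu.
have r := thmM (ltn0Sn m) (from_ok hdeg) (from_union hu) (from_col ca) (from_col cb)
            (from_unfr ca ua) (from_unfr cb ub).
have r2 := tr_rc r.
apply: clos_rt_rt1n.
have cF : forall f : 'I_m.+1 -> nat, is_Lcol L f -> is_Lcol L (fun i => f (inord (nat_of_ord i))).
  by move=> f [H1 H2]; split => [v|u v]; rewrite /= !inord_val; [apply: H1|apply: H2].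
have e : forall f : 'I_m.+1 -> nat, is_Lcol L f ->
    clos_refl_trans _ (@recol_step m.+1 L) f (fun i => f (inord (nat_of_ord i))).
  move=> f cf; apply: rt_step; split; first exact: cf.
  split; first exact: cF.
  by exists ord0 => u _; rewrite /= inord_val.
have e2 : forall f : 'I_m.+1 -> nat, is_Lcol L f ->
    clos_refl_trans _ (@recol_step m.+1 L) (fun i => f (inord (nat_of_ord i))) f.
  move=> f cf; apply: rt_step; split; first exact: cF.
  split; first exact: cf.
  by exists ord0 => u _; rewrite /= inord_val.
apply: rt_trans (e _ ca) _.
apply: rt_trans r2 _.
exact: e2.
Qed.
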